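(* Let $n\ge2$ and $\rho\in\mathbb{R}\setminus\{-1,0,1\}$. Then $K_n(\rho)=\left[\rho^{|j-k|}\right]_{j,k=1}^n$ has $n$ distinct real eigenvalues. *)

(* Defs.v *)
From HB Require Import structures.
From mathcomp Require Import all_boot all_order all_algebra.
From mathcomp Require Import reals.
Set Implicit Arguments. Unset Strict Implicit. Unset Printing Implicit Defensive.
Import Order.TTheory GRing.Theory Num.Theory.
Local Open Scope ring_scope.

(* Kac-Murdock-Szego matrix K_n(rho) = [rho^{|j-k|}]_{j,k}, indices 0..n-1
   (shift of the paper's 1..n, which does not change |j-k|). *)
Definition KMS (R : realType) (n : nat) (rho : R) : 'M[R]_n :=
  \matrix_(j < n, k < n) rho ^+ `|(j : nat) - (k : nat)|%N.

(* Main.v *)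
From HB Require Import structures.
From mathcomp Require Import all_boot all_order all_algebra.
From mathcomp Require Import reals.
From mathcomp Require Import zify ring lra.
From mathcomp Require Import polyrcf.
Require Import Defs.
Set Implicit Arguments. Unset Strict Implicit.
Import Order.TTheory GRing.Theory Num.Theory.
Local Open Scope ring_scope.

Lemma fchoice_nat (T : Type) (Q : nat -> T -> Prop) k :
  (forall j, (j <= k)%N -> exists y, Q j y) ->
  exists f : nat -> T, forall j, (j <= k)%N -> Q j (f j).
Proof.
elim: k => [|k IH] H.
  have [y Hy] := H 0%N (leqnn 0); exists (fun _ => y) => j; rewrite leqn0 => /eqP->//.
have [f Hf] : exists f : nat -> T, forall j, (j <= k)%N -> Q j (f j).
  by apply: IH => j hj; apply: H; rewrite (leq_trans hj).
have [y Hy] := H k.+1 (leqnn _).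
exists (fun j => if j == k.+1 then y else f j) => j hj.
case: eqP => [->//|/eqP hne]; apply: Hf; move: hj hne; lia.
Qed.

Section Interlace.
Variable R : rcfType.
Variable a : nat -> R.
Variable c : R.
Hypothesis c_gt0 : 0 < c.

Fixpoint PP (k : nat) : {poly R} * {poly R} :=
  if k is k'.+1 then
    (( PP k').2, ('X - (a k')%:P) * (PP k').2 - c%:P * (PP k').1)
  else (0, 1).
Definition P k := (PP k).2.
Definition Pm k := (PP k).1.
Lemma PS k : P k.+1 = ('X - (a k)%:P) * P k - c%:P * Pm k. Proof. by []. Qed.
Lemma PmS k : Pm k.+1 = P k. Proof. by []. Qed.
Lemma P0 : P 0 = 1. Proof. by []. Qed.
Lemma Pm0 : Pm 0 = 0. Proof. by []. Qed.
Lemma PSh k (y : R) : (P k.+1).[y] = (y - a k) * (P k).[y] - c * (Pm k).[y].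
Proof. by rewrite PS hornerD hornerN !hornerM hornerC hornerXsubC. Qed.

Lemma size_P k : size (P k) = k.+1 /\ (size (Pm k) <= k)%N /\ lead_coef (P k) = 1.
Proof.
elim: k => [|k [s1 [s2 l1]]].
  by rewrite P0 Pm0 size_poly1 size_poly0 lead_coef1.
have hm : ('X - (a k)%:P) * P k \is monic by rewrite monicMl ?monicXsubC // monicE l1.
have sm : size (('X - (a k)%:P) * P k) = k.+2.
  have pn0 : P k != 0 by rewrite -size_poly_eq0 s1.
  by rewrite size_monicM ?monicXsubC // size_XsubC s1.
have sc : (size (c%:P * Pm k)%R < k.+2)%N.
  by rewrite (leq_ltn_trans (size_polyMleq _ _)) // size_polyC; move: s2; case: (c != 0) => /= ?; rewrite ?add0n ?add1n /=; lia.
split; last split.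
- by rewrite PS size_polyDl ?size_polyN ?sm.
- by rewrite PmS s1.
rewrite PS lead_coefDl ?size_polyN ?sm //; exact/monicP.
Qed.

Lemma mono (x : nat -> R) k : (forall i, (i.+1 < k)%N -> x i < x i.+1) ->
  forall i j, (i < j)%N -> (j < k)%N -> x i < x j.
Proof.
move=> H i; elim=> [//|j IH] hij hjk.
have := H j hjk; rewrite ltnS leq_eqVlt in hij; case/orP: hij => [/eqP->//|hij].
by apply: lt_trans; apply: IH => //; lia.
Qed.

Lemma monoW (x : nat -> R) k : (forall i, (i.+1 < k)%N -> x i < x i.+1) ->
  forall i j, (i <= j)%N -> (j < k)%N -> x i <= x j.
Proof.
move=> H i j; rewrite leq_eqVlt => /orP[/eqP->//|hij hjk].
by apply/ltW; apply: (mono H).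
Qed.

Lemma sign_prod (x : nat -> R) y j k : (j <= k)%N ->
  (forall i, (i < j)%N -> x i < y) -> (forall i, (j <= i < k)%N -> y < x i) ->
  0 < (-1) ^+ (k - j) * \prod_(0 <= i < k) (y - x i).
Proof.
elim: k => [|k IH] hjk hlt hgt.
  by rewrite big_nil mulr1 expr0.
move: hjk; rewrite leq_eqVlt => /orP[/eqP hj|hj].
  rewrite hj subnn expr0 mul1r big_seq; apply: prodr_gt0 => i.
  by rewrite mem_index_iota subr_gt0 => /andP[_ hi]; apply: hlt; rewrite hj.
rewrite big_nat_recr //= subSn // exprS.
have hgt' : forall i, (j <= i < k)%N -> y < x i by move=> i hi; apply: hgt; lia.
have := IH hj hlt hgt'.
have : y < x k by apply: hgt; lia.
rewrite -subr_gt0 => h1 h2.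
have -> : -1 * (-1) ^+ (k - j) * (\prod_(0 <= i < k) (y - x i) * (y - x k)) =
   ((-1) ^+ (k - j) * \prod_(0 <= i < k) (y - x i)) * (x k - y) by ring.
exact: mulr_gt0.
Qed.

Definition Inv k (x : nat -> R) :=
 [/\ forall i, (i.+1 < k)%N -> x i < x i.+1,
     forall i, (i < k)%N -> root (P k) (x i) &
     forall i, (i < k)%N -> 0 < (-1) ^+ (k.-1 - i) * (Pm k).[x i]].

Lemma P_fact k x : Inv k x -> forall y, (P k).[y] = \prod_(0 <= i < k) (y - x i).
Proof.
case=> hinc hroot _ y.
have [s1 [_ l1]] := size_P k.
have := @all_roots_prod_XsubC _ (P k) (mkseq x k).
rewrite size_mkseq l1 scale1r => ->//.
- by rewrite horner_prod /mkseq big_map /index_iota subn0; apply: eq_bigr => i _; rewrite hornerXsubC.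
- by apply/allP => z /mapP [i]; rewrite mem_iota add0n; move=> /andP[_ hi] ->; apply: hroot.
rewrite uniq_rootsE map_inj_in_uniq ?iota_uniq // => i j.
rewrite !mem_iota !add0n /=; move=> hi hj e.
case: (ltngtP i j) => // h.
  by have := mono hinc h hj; rewrite e ltxx.
by have := mono hinc h hi; rewrite e ltxx.
Qed.


Lemma sq_sign m : (-1) ^+ m * (-1) ^+ m = 1 :> R.
Proof. by rewrite -exprMn mulN1r opprK expr1n. Qed.

Lemma neg_prod (s A B : R) : s * s = 1 -> 0 < - s * A -> 0 < s * B -> A * B < 0.
Proof.
move=> hs h1 h2.
have e : (- s * A) * (s * B) = - (s * s) * (A * B) by ring.
have := mulr_gt0 h1 h2; rewrite e hs mulN1r oppr_gt0 //.
Qed.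

Lemma Inv_step k x : (0 < k)%N -> Inv k x -> exists y, Inv k.+1 y.
Proof.
move=> k0 hI; case: (hI) => hinc hroot hsgn.
set p := P k.+1.
have hpx : forall i, (i < k)%N -> 0 < (-1) ^+ (k - i) * p.[x i].
  move=> i hi; have := hsgn i hi; have := hroot i hi.
  rewrite /p PS hornerD hornerN !hornerM hornerC => /rootP ->.
  have -> : (k - i = (k.-1 - i).+1)%N by lia.
  rewrite exprS => h.
  have -> : -1 * (-1) ^+ (k.-1 - i) * ((('X - (a k)%:P).[x i]) * 0 - c * (Pm k).[x i])
     = c * ((-1) ^+ (k.-1 - i) * (Pm k).[x i]) by ring.
  exact: mulr_gt0.
have [s1 [_ lp]] := size_P k.+1.
have lp0 : 0 < lead_coef p by rewrite /p lp ltr01.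
have [N HN] := poly_pinfty_gt_lc lp0.
have right : exists y, x k.-1 < y /\ root p y.
  set M1 := Num.max N (x k.-1 + 1).
  have h1 : 0 < p.[M1].
    have := HN M1; rewrite /p lp le_max lexx /= => /(_ isT) h; exact: lt_le_trans h.
  have h2 : p.[x k.-1] < 0.
    have := hpx k.-1 ltac:(lia); have -> : (k - k.-1 = 1)%N by lia.
    by rewrite expr1 mulN1r oppr_gt0.
  have hle : x k.-1 <= M1 by rewrite le_max; apply/orP; right; lra.
  have hneg : p.[x k.-1] * p.[M1] < 0 by rewrite pmulr_llt0.
  have [y hy ry] := poly_ivtoo hle hneg.
  by exists y; split => //; move: hy; rewrite in_itv /= => /andP[].
have left : exists y, y < x 0 /\ root p y.
  set q := (-1) ^+ k.+1 *: (p \Po -'X).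
  have sX : size (- 'X : {poly R}) = 2 by rewrite size_polyN size_polyX.
  have lq : lead_coef q = 1.
    rewrite /q lead_coefZ lead_coef_comp ?sX // lead_coefN lead_coefX /p lp s1 /=.
    by rewrite mul1r sq_sign.
  have lq0 : 0 < lead_coef q by rewrite lq ltr01.
  have [N' HN'] := poly_pinfty_gt_lc lq0.
  set M0 := Num.min (- N') (x 0 - 1).
  have hM0a : M0 <= - N' by rewrite ge_min lexx.
  have hM0b : M0 <= x 0 - 1 by rewrite ge_min lexx orbT.
  have h1 : 1 <= - (-1) ^+ k * p.[M0].
    have := HN' (- M0); rewrite lq /q hornerZ horner_comp hornerN hornerX opprK exprS mulN1r.
    by apply; lra.
  have h2 : 0 < (-1) ^+ k * p.[x 0] by have := hpx 0%N k0; rewrite subn0.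
  have hle : M0 <= x 0 by lra.
  have hneg : p.[M0] * p.[x 0] < 0.
    by apply: (neg_prod (sq_sign k)) => //; apply: lt_le_trans h1.
  have [y hy ry] := poly_ivtoo hle hneg.
  by exists y; split => //; move: hy; rewrite in_itv /= => /andP[].
have mid : forall j, (0 < j < k)%N -> exists y, x j.-1 < y /\ y < x j /\ root p y.
  move=> j hj.
  have h1 := hpx j.-1 ltac:(lia).
  have h2 := hpx j ltac:(lia).
  have e : (k - j.-1 = (k - j).+1)%N by lia.
  rewrite e in h1.
  rewrite exprS mulN1r in h1.
  have hle : x j.-1 <= x j by apply: (monoW hinc); lia.
  have hneg : p.[x j.-1] * p.[x j] < 0 by apply: (neg_prod (sq_sign (k - j))).
  have [y hy ry] := poly_ivtoo hle hneg.
  by exists y; move: hy; rewrite in_itv /= => /andP[].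
have [y Hy] : exists y : nat -> R, forall j, (j <= k)%N ->
    [/\ (0 < j)%N -> x j.-1 < y j, (j < k)%N -> y j < x j & root p (y j)].
  apply: (@fchoice_nat R (fun j yj => [/\ (0 < j)%N -> x j.-1 < yj, (j < k)%N -> yj < x j & root p yj]) k) => j hj.
  case: (posnP j) => [->|jp].
    by have [y [h1 h2]] := left; exists y; split.
  case: (ltnP j k) => jk.
    have [y [h1 [h2 h3]]] := mid j ltac:(lia); by exists y; split.
  have -> : j = k by lia.
  by have [y [h1 h2]] := right; exists y; split => // /ltnn.
exists y; split.
- move=> i hi; have [_ a1 _] := Hy i ltac:(lia); have [a2 _ _] := Hy i.+1 ltac:(lia).
  exact: lt_trans (a1 ltac:(lia)) (a2 isT).
- by move=> i hi; have [_ _ ->] := Hy i ltac:(lia).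
move=> i hi; rewrite PmS (P_fact hI) /=.
have hik : (i <= k)%N by lia.
apply: sign_prod => //.
  move=> l hl; have [b1 _ _] := Hy i hik.
  apply: le_lt_trans (b1 ltac:(lia)); apply: (monoW hinc); lia.
move=> l /andP[hl1 hl2]; have [_ b2 _] := Hy i hik.
apply: lt_le_trans (b2 ltac:(lia)) _; apply: (monoW hinc); lia.
Qed.

Lemma inv_all k : exists x, Inv k x.
Proof.
elim: k => [|k [x hx]].
  by exists (fun _ => 0); split => i.
case: (posnP k) => [->|kp]; last exact: Inv_step kp hx.
exists (fun _ => a 0); split => i //.
  by move=> _; rewrite /root PS P0 Pm0 !hornerE subrr subr0.
by move=> _; rewrite PmS P0 hornerC mulr1 ltr01.
Qed.

End Interlace.

Lemma sum_pick (R : realType) m (b : bool) (i0 : nat) (F : nat -> R) :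
  \sum_(l < m) (if b && ((l : nat) == i0) then F l else 0) =
  if b && (i0 < m)%N then F i0 else 0.
Proof.
case: b => /=; last by rewrite big1.
case: ltnP => h.
  rewrite (bigD1 (Ordinal h)) //= eqxx big1 ?addr0 // => l hl.
  case: eqP => // e; move: hl; have -> : l = Ordinal h by apply: val_inj.
  by rewrite eqxx.
rewrite big1 // => l _; case: eqP => // e; move: (ltn_ord l); rewrite e; lia.
Qed.

Section Main.
Variable R : realType.
Variable n : nat.
Variable rho : R.
Hypothesis n2 : (2 <= n)%N.
Hypothesis r0 : rho != 0.

Definition d (k : nat) : R := if (k == 0)%N || ((k : nat) == n.-1) then 1 else 1 + rho ^+ 2.
Definition Tf (j l : nat) : R :=
  (if j == l then d j else 0) - (if j.+1 == l then rho else 0) - (if l.+1 == j then rho else 0).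
Definition Tm : 'M[R]_n := \matrix_(j < n, l < n) Tf j l.

Lemma Tf_sym j l : Tf j l = Tf l j.
Proof.
rewrite /Tf [l == j]eq_sym; case: eqP => [->|_] //; by rewrite addrAC.
Qed.

Lemma sumT (G : nat -> R) k : (k < n)%N ->
  \sum_(l < n) Tf l k * G l = d k * G k - (if (0 < k)%N then rho * G k.-1 else 0)
     - (if (k.+1 < n)%N then rho * G k.+1 else 0).
Proof.
move=> kn.
rewrite /Tf.
under eq_bigr => l _ do rewrite !mulrBl.
rewrite !sumrB.
have -> : \sum_(l < n) (if (l : nat) == k then d l else 0) * G l =
          \sum_(l < n) (if true && ((l : nat) == k) then (fun l => d l * G l) l else 0).
  by apply: eq_bigr => l _ /=; case: eqP; rewrite ?mul0r.
have -> : \sum_(l < n) (if (l : nat).+1 == k then rho else 0) * G l =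
          \sum_(l < n) (if (0 < k)%N && ((l : nat) == k.-1) then (fun l => rho * G l) l else 0).
  apply: eq_bigr => l _ /=.
  have -> : ((l : nat).+1 == k) = (0 < k)%N && ((l : nat) == k.-1) by case: (k).
  by case: ifP; rewrite ?mul0r.
have -> : \sum_(l < n) (if k.+1 == (l : nat) then rho else 0) * G l =
          \sum_(l < n) (if true && ((l : nat) == k.+1) then (fun l => rho * G l) l else 0).
  by apply: eq_bigr => l _ /=; rewrite eq_sym; case: ifP; rewrite ?mul0r.
rewrite (sum_pick _ _ _ (fun l => d l * G l)) (sum_pick _ _ _ (fun l => rho * G l)).
rewrite (sum_pick _ _ _ (fun l => rho * G l)) /= kn.
have -> : (k.-1 < n)%N by lia.
by rewrite andbT.
Qed.


Lemma TK : Tm *m KMS n rho = (1 - rho ^+ 2)%:M.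
Proof.
apply/matrixP => j k; rewrite !mxE.
under eq_bigr => l _ do rewrite !mxE Tf_sym.
have E := sumT (fun l : nat => rho ^+ `|l - k|%N) (ltn_ord j).
rewrite /= in E; rewrite E {E} /d.
case: (ltngtP j k) => hjk.
- have -> : (j.+1 < n)%N by have := ltn_ord k; lia.
  have -> : ((j : nat) == n.-1) = false by apply/eqP; have := ltn_ord k; lia.
  have -> : (j == k) = false by apply/negbTE; rewrite -val_eqE /=; lia.
  rewrite orbF mulr0n.
  have -> : `|(j:nat) - (k:nat)|%N = (k - j - 1)%N.+1 by lia.
  have -> : `|(j:nat).+1 - (k:nat)|%N = (k - j - 1)%N by lia.
  case: (posnP j) => [j0|jp]; first by rewrite j0 /= mul1r subr0 exprS subrr.
  have -> : `|(j:nat).-1 - (k:nat)|%N = (k - j - 1)%N.+2 by lia.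
  rewrite /= !exprS; ring.
- have -> : (0 < j)%N by lia.
  have -> : ((j : nat) == 0%N) = false by lia.
  have -> : (j == k) = false by apply/negbTE; rewrite -val_eqE /=; lia.
  rewrite mulr0n /=.
  have -> : `|(j:nat) - (k:nat)|%N = (j - k - 1)%N.+1 by lia.
  have -> : `|(j:nat).-1 - (k:nat)|%N = (j - k - 1)%N by lia.
  case: (ltnP j.+1 n) => hn.
    have -> : ((j : nat) == n.-1) = false by lia.
    have -> : `|(j:nat).+1 - (k:nat)|%N = (j - k - 1)%N.+2 by lia.
    rewrite /= !exprS; ring.
  have -> : ((j : nat) == n.-1) = true by have := ltn_ord j; lia.
  by rewrite /= mul1r subr0 exprS subrr.
- have ejk : j = k by apply: val_inj.
  rewrite ejk eqxx mulr1n.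
  have -> : `|(k:nat) - (k:nat)|%N = 0%N by lia.
  have -> : `|(k:nat).+1 - (k:nat)|%N = 1%N by lia.
  rewrite expr0 mulr1 expr1.
  case: (posnP k) => [k0|kp].
    have -> : (k.+1 < n)%N by lia.
    by rewrite k0 /= subr0 expr2.
  have -> : `|(k:nat).-1 - (k:nat)|%N = 1%N by lia.
  rewrite expr1.
  case: (ltnP k.+1 n) => hn.
    have -> : ((k : nat) == n.-1) = false by lia.
    rewrite /= expr2; ring.
  have -> : ((k : nat) == n.-1) = true by have := ltn_ord k; lia.
  by rewrite /= subr0 expr2.
Qed.


Definition vf (mu : R) (k : nat) : R := (P d (rho ^+ 2) k).[mu] * ((- rho)^-1) ^+ k.

Lemma vT mu : root (P d (rho ^+ 2) n) mu ->
  (\row_(k < n) vf mu k) *m Tm = mu *: \row_(k < n) vf mu k.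
Proof.
move=> hr; apply/matrixP => i k; rewrite !mxE.
under eq_bigr => l _ do rewrite !mxE mulrC.
rewrite (sumT (vf mu) (ltn_ord k)).
have nr : - rho != 0 by rewrite oppr_eq0.
have gen : forall k', d k'.+1 * vf mu k'.+1 - rho * vf mu k' - rho * vf mu k'.+2
                       = mu * vf mu k'.+1.
  move=> k'; rewrite /vf.
  set b := (- rho)^-1.
  rewrite (PSh _ _ k'.+1) (PmS _ _ k').
  set w1 := (P d (rho ^+ 2) k'.+1).[mu]; set w0 := (P d (rho ^+ 2) k').[mu].
  rewrite [b ^+ k'.+2]exprS [b ^+ k'.+1]exprS /b.
  by field.
case: k => [[|k'] hk] /=.
  have -> : (1 < n)%N by [].
  rewrite /vf (PSh _ _ 0) P0 Pm0 !hornerC.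
  by rewrite expr0 expr1; field.
case: (ltnP k'.+2 n) => hn; first by rewrite gen.
have h0 : vf mu k'.+2 = 0.
  have -> : k'.+2 = n by lia.
  by rewrite /vf (rootP hr) mul0r.
by rewrite -gen h0 mulr0 !subr0.
Qed.

End Main.

Theorem proposition6p1 (R : realType) (n : nat) (rho : R) :
  (2 <= n)%N -> rho != -1 -> rho != 0 -> rho != 1 ->
  exists s : seq R,
    [/\ size s = n, uniq s & forall x, x \in s -> eigenvalue (KMS n rho) x].
Proof.
move=> n2 rm1 r0 r1.
have c_gt0 : 0 < rho ^+ 2 by rewrite lt_def sqr_ge0 andbT sqrf_eq0.
have q0 : 1 - rho ^+ 2 != 0 by rewrite subr_eq0 eq_sym sqrf_eq1 negb_or r1 rm1.
have [x [hinc hroot _]] := inv_all (d n rho) c_gt0 n.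
have key : forall mu, root (P (d n rho) (rho ^+ 2) n) mu ->
    mu != 0 /\ eigenvalue (KMS n rho) ((1 - rho ^+ 2) / mu).
  move=> mu hr.
  set v := \row_(k < n) vf n rho mu k.
  have hv : v *m Tm n rho = mu *: v := @vT R n rho n2 r0 mu hr.
  have n0 : (0 < n)%N by lia.
  have hv0 : v != 0.
    apply/eqP => /matrixP /(_ 0 (Ordinal n0)); rewrite !mxE /vf P0 hornerC expr0 mulr1.
    by move/eqP; rewrite oner_eq0.
  have e : (1 - rho ^+ 2) *: v = mu *: (v *m KMS n rho).
    by rewrite -(mul_mx_scalar _ v) -(@TK R n rho n2 r0) (mulmxA v) hv scalemxAl.
  have mu0 : mu != 0.
    apply/eqP => m0; move: e; rewrite m0 scale0r => /eqP.
    by rewrite scaler_eq0 (negbTE q0) /= (negbTE hv0).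
  split=> //; apply/eigenvalueP; exists v => //.
  rewrite -[v *m _]scale1r -{1}(mulVf mu0) -scalerA -e scalerA.
  by rewrite mulrC.
exists [seq (1 - rho ^+ 2) / x i | i <- iota 0 n]; split.
- by rewrite size_map size_iota.
- rewrite map_inj_in_uniq ?iota_uniq // => i j.
  rewrite !mem_iota !add0n /=; move=> hi hj e.
  have : x i = x j by move: e => /(mulfI q0)/invr_inj.
  case: (ltngtP i j) => // h.
    by have := mono c_gt0 hinc h hj => /[swap] ->; rewrite ltxx.
  by have := mono c_gt0 hinc h hi => /[swap] ->; rewrite ltxx.
move=> y /mapP [i]; rewrite mem_iota add0n; move=> /andP[_ hi] ->.
by have [_] := key _ (hroot i hi).
Qed.
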